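(* For a length-$N$ steganographic code subject to distortion $D$ with zero probability of error (for any $\varepsilon>0$, $P(\phi_N(X^N,K)\ne M)\le\varepsilon$), the unicity distance $n_0$ for known-cover extracting attack and the unicity distance $n_1$ for stego-only extracting attack satisfy, for any given $\varepsilon>0$, \[ n_1\ \ge\ n_0\ \ge\ \frac{R_k}{C(D)-R_m+\varepsilon}, \] where $C(D)=\max_{q(x|\widetilde{x})\in Q}H(X|\widetilde{X})$ is the hiding capacity, $R_m=H(M)/N$ is the message rate and $R_k=H(K)/N$ is the key rate.
   Context: Model. $\mathcal{X}$ is a finite alphabet, $\mathcal{K}$ a finite key set. A distortion function is $d:\mathcal{X}\times\mathcal{X}\to[0,\infty)$, extended to $N$-tuples by averaging. A length-$N$ steganographic code subject to distortion $D$ is a triple $(\mathcal{M},f_N,\phi_N)$ with finite message set $\mathcal{M}$, embedding map $f_N:\mathcal{X}^N\times\mathcal{M}\times\mathcal{K}\to\mathcal{X}^N$ whose average distortion (averaged over cover distribution, uniform message and uniform key) is at most $D$, and extraction map $\phi_N(x^N,k)\in\mathcal{M}$. The cover $\widetilde{X}^N$ is i.i.d. from $P(\widetilde{x})$; the message $M$ is uniform and independent of the cover; the key $K$ is independent of message and cover; $X^N=f_N(\widetilde{X}^N,M,K)$. Admissible cover channels: $Q=\{q(x|\widetilde{x}):\sum_{\widetilde{x},x}d(\widetilde{x},x)q(x|\widetilde{x})P(\widetilde{x})\le D\}$, acting memorylessly on $N$-tuples. In an $n$-fold use, $n$ i.i.d. covers and messages are embedded with the same key. Given $n$ observed pairs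 of cover/stego objects, a key $k$ is possible if there is a message sequence of positive probability which, embedded with $k$ into the observed covers, yields the observed stego objects; the expected number of spurious keys $\overline{S}_n$ is the expectation of (number of possible keys $-1$). The unicity distance $n_0$ (known-cover attack) is the minimum number of cover/stego pairs with which the expected number of spurious stego keys equals zero; the unicity distance $n_1$ (stego-only attack) is the minimum number of stego objects with which the expected number of spurious stego keys equals zero (where possible keys are those consistent with the stego objects alone). Entropies are in bits. *)

(* Defs.v *)
From HB Require Import structures.
From mathcomp Require Import all_boot all_order all_algebra.
From mathcomp Require Import classical_sets boolp reals exp.
Set Implicit Arguments. Unset Strict Implicit. Unset Printing Implicit Defensive.
Import Order.TTheory GRing.Theory Num.Theory.
Local Open Scope ring_scope.
Local Open Scope classical_set_scope.

Section Steg.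
Variable R : realType.

Definition log2 (x : R) : R := ln x / ln 2.

Definition negxlog2 (t : R) : R := if t == 0 then 0 else - (t * log2 t).

Definition entropy (T : finType) (p : T -> R) : R := \sum_(x : T) negxlog2 (p x).

Definition uniform (T : finType) : T -> R := fun _ => (#|T|%:R)^-1.

Definition is_distr (T : finType) (p : T -> R) : Prop :=
  (forall x, 0 <= p x) /\ \sum_(x : T) p x = 1.

(* q xt x = q(x | xt) *)
Definition is_channel (X : finType) (q : X -> X -> R) : Prop :=
  forall xt, is_distr (q xt).

Definition channel_distortion (X : finType) (P : X -> R) (d : X -> X -> R)
  (q : X -> X -> R) : R :=
  \sum_(xt : X) \sum_(x : X) d xt x * q xt x * P xt.

Definition admissible_channels (X : finType) (P : X -> R) (d : X -> X -> R)
  (D : R) : set (X -> X -> R) :=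
  [set q | is_channel q /\ channel_distortion P d q <= D].

Definition cond_entropy (X : finType) (P : X -> R) (q : X -> X -> R) : R :=
  \sum_(xt : X) P xt * entropy (q xt).

(* hiding capacity C(D) = max_{q in Q} H(X | Xt) (the max is attained;
   written as the supremum) *)
Definition hiding_capacity (X : finType) (P : X -> R) (d : X -> X -> R)
  (D : R) : R :=
  sup [set cond_entropy P q | q in admissible_channels P d D].

Definition prodP (X : finType) (N : nat) (P : X -> R) (xs : N.-tuple X) : R :=
  \prod_(i < N) P (tnth xs i).

Definition distN (X : finType) (N : nat) (d : X -> X -> R)
  (xs ys : N.-tuple X) : R :=
  (N%:R)^-1 * \sum_(i < N) d (tnth xs i) (tnth ys i).

Section Code.
Variables (X K M : finType) (N : nat).
Variable f : N.-tuple X -> M -> K -> N.-tuple X.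
Variable phi : N.-tuple X -> K -> M.

Definition avg_distortion (P : X -> R) (d : X -> X -> R) : R :=
  \sum_(xs : N.-tuple X) \sum_(m : M) \sum_(k : K)
     prodP P xs * @uniform M m * @uniform K k * distN d xs (f xs m k).

Definition error_prob (P : X -> R) : R :=
  \sum_(xs : N.-tuple X) \sum_(m : M) \sum_(k : K)
     prodP P xs * @uniform M m * @uniform K k *
     (if phi (f xs m k) k != m then 1 else 0).

Definition seqprob (T : finType) (n : nat) (p : T -> R) (s : {ffun 'I_n -> T}) : R :=
  \prod_(i < n) p (s i).

Definition stego (n : nat) (cs : {ffun 'I_n -> N.-tuple X})
  (ms : {ffun 'I_n -> M}) (k : K) : {ffun 'I_n -> N.-tuple X} :=
  [ffun i => f (cs i) (ms i) k].

(* known-cover: key k' is possible for observed covers cs / stegos ss *)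
Definition possible_kc (n : nat) (cs ss : {ffun 'I_n -> N.-tuple X}) (k' : K) : bool :=
  [exists ms : {ffun 'I_n -> M},
     (0 < seqprob (@uniform M) ms) && (stego cs ms k' == ss)].

(* stego-only: key k' is possible for observed stegos ss *)
Definition possible_so (P : X -> R) (n : nat) (ss : {ffun 'I_n -> N.-tuple X})
  (k' : K) : bool :=
  [exists cs : {ffun 'I_n -> N.-tuple X}, exists ms : {ffun 'I_n -> M},
     [&& 0 < seqprob (prodP P) cs, 0 < seqprob (@uniform M) ms
       & stego cs ms k' == ss]].

Definition spurious_kc (P : X -> R) (n : nat) : R :=
  \sum_(k : K) \sum_(cs : {ffun 'I_n -> N.-tuple X}) \sum_(ms : {ffun 'I_n -> M})
    @uniform K k * seqprob (prodP P) cs * seqprob (@uniform M) ms *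
    ((#|[pred k' : K | possible_kc cs (stego cs ms k) k']|)%:R - 1).

Definition spurious_so (P : X -> R) (n : nat) : R :=
  \sum_(k : K) \sum_(cs : {ffun 'I_n -> N.-tuple X}) \sum_(ms : {ffun 'I_n -> M})
    @uniform K k * seqprob (prodP P) cs * seqprob (@uniform M) ms *
    ((#|[pred k' : K | possible_so P (stego cs ms k) k']|)%:R - 1).
End Code.

Definition is_unicity_distance (S : nat -> R) (n : nat) : Prop :=
  S n = 0 /\ forall m, S m = 0 -> (n <= m)%N.

End Steg.
Arguments uniform R T _ : clear implicits.

(* Main.v *)
Require Import Defs.
From HB Require Import structures.
From mathcomp Require Import all_boot all_order all_algebra.
From mathcomp Require Import classical_sets boolp reals exp.
From mathcomp Require Import lra ring.
Set Implicit Arguments. Unset Strict Implicit. Unset Printing Implicit Defensive.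
Import Order.TTheory GRing.Theory Num.Theory.
Local Open Scope ring_scope.

Section Gen.
Variable R : realType.

Lemma sum_ge_term (I : finType) (F : I -> R) i :
  (forall j, 0 <= F j) -> F i <= \sum_j F j.
Proof. by move=> F0; rewrite (bigD1 i) //= lerDl sumr_ge0. Qed.

Lemma sum_tuple_prod (T : finType) n (F : 'I_n -> T -> R) :
  \sum_(t : n.-tuple T) \prod_(i < n) F i (tnth t i) = \prod_(i < n) \sum_x F i x.
Proof.
rewrite bigA_distr_bigA (reindex (@tuple_of_finfun T n)) /=.
  by apply: eq_bigr => g _; apply: eq_bigr => i _; rewrite tnth_mktuple.
exists (@finfun_of_tuple T n) => x _; [exact: tuple_of_finfunK | exact: finfun_of_tupleK].
Qed.

Lemma marg_ffun (T : finType) n (p : T -> R) (H : T -> R) (j : 'I_n) :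
  \sum_t p t = 1 ->
  \sum_(s : {ffun 'I_n -> T}) (\prod_i p (s i)) * H (s j) = \sum_t p t * H t.
Proof.
move=> p1.
transitivity (\sum_(s : {ffun 'I_n -> T}) \prod_i (if i == j then p (s i) * H (s i) else p (s i))).
  apply: eq_bigr => s _; rewrite (bigD1 j) //= [in RHS](bigD1 j) //= eqxx.
  rewrite mulrAC; congr (_ * _).
  by apply: eq_bigr => i /negbTE ->.
rewrite -(bigA_distr_bigA (fun i t => if i == j then p t * H t else p t)).
rewrite (bigD1 j) //= eqxx [X in _ * X]big1 ?mulr1 // => i /negbTE ->; exact: p1.
Qed.

Lemma sum_ffun_prod (T : finType) n (F : 'I_n -> T -> R) :
  \sum_(s : {ffun 'I_n -> T}) \prod_(i < n) F i (s i) = \prod_(i < n) \sum_x F i x.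
Proof. by rewrite bigA_distr_bigA. Qed.

Lemma ln_le_sub1 (y : R) : 0 < y -> ln y <= y - 1.
Proof. move=> y0; have := @le_ln1Dx R (y - 1); rewrite addrCA subrr addr0; apply; rewrite ltrBrDl; lra. Qed.

Lemma ln_prod (I : finType) (F : I -> R) : (forall i, 0 < F i) ->
  ln (\prod_i F i) = \sum_i ln (F i).
Proof.
move=> F0.
suff: (0 < \prod_i F i) /\ ln (\prod_i F i) = \sum_i ln (F i) by case.
apply: (big_ind2 (fun a b => 0 < a /\ ln a = b)).
- by rewrite ln1.
- move=> a b c e [a0 <-] [c0 <-]; split; first exact: mulr_gt0.
  by rewrite lnM // posrE.
- by move=> i _; split.
Qed.
Lemma sum_tuple_ffun (T : finType) n (F : n.-tuple T -> R) :
  \sum_(t : n.-tuple T) F t = \sum_(g : {ffun 'I_n -> T}) F (tuple_of_finfun g).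
Proof.
rewrite (reindex (@tuple_of_finfun T n)) //.
exists (@finfun_of_tuple T n) => x _; [exact: tuple_of_finfunK | exact: finfun_of_tupleK].
Qed.

Lemma marg_tuple (T : finType) n (p : T -> R) (H : T -> R) (j : 'I_n) :
  \sum_t p t = 1 ->
  \sum_(t : n.-tuple T) (\prod_i p (tnth t i)) * H (tnth t j) = \sum_t p t * H t.
Proof.
move=> p1; rewrite sum_tuple_ffun -(marg_ffun H j p1).
apply: eq_bigr => g _; rewrite tnth_mktuple; congr (_ * _).
by apply: eq_bigr => i _; rewrite tnth_mktuple.
Qed.

Lemma sum_gt0_term (I : finType) (F : I -> R) i :
  (forall j, 0 <= F j) -> 0 < F i -> 0 < \sum_j F j.
Proof. by move=> F0 Fi; apply: lt_le_trans Fi (sum_ge_term _ F0). Qed.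

Lemma uniform_gt0 (T : finType) t : 0 < uniform R T t.
Proof. by rewrite /uniform invr_gt0 ltr0n; apply/card_gt0P; exists t. Qed.

Lemma sum_uniform (T : finType) : (0 < #|T|)%N -> \sum_t uniform R T t = 1.
Proof.
move=> T0; rewrite sumr_const /uniform -[_ *+ _]mulr_natr mulVf //.
by rewrite pnatr_eq0 -lt0n.
Qed.

Lemma sum0_term (I : finType) (F : I -> R) :
  (forall i, 0 <= F i) -> \sum_i F i = 0 -> forall i, F i = 0.
Proof.
move=> F0 /eqP; rewrite psumr_eq0 => [/allP H i|]; last by move=> ? _; exact: F0.
by apply/eqP; apply: H; rewrite mem_index_enum.
Qed.

Lemma sum3_0 (I J L : finType) (F : I -> J -> L -> R) :
  (forall a b c, 0 <= F a b c) -> \sum_a \sum_b \sum_c F a b c = 0 ->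
  forall a b c, F a b c = 0.
Proof.
move=> F0 H a b c.
have h1 := sum0_term (fun a => sumr_ge0 _ (fun b _ => sumr_ge0 _ (fun c _ => F0 a b c))) H a.
have h2 := sum0_term (fun b => sumr_ge0 _ (fun c _ => F0 a b c)) h1 b.
exact: (sum0_term (fun c => F0 a b c) h2 c).
Qed.

Lemma prod_pos_factor (I : finType) (F : I -> R) :
  (forall i, 0 <= F i) -> 0 < \prod_i F i -> forall i, 0 < F i.
Proof.
move=> F0 Fp i; rewrite lt_def F0 andbT; apply/eqP => Fi0.
by move: Fp; rewrite (bigD1 i) //= Fi0 mul0r ltxx.
Qed.

Lemma le0_of_small (x : R) : (forall e, 0 < e -> x <= e) -> x <= 0.
Proof. by move=> H; apply/ler_addgt0Pr => e e0; rewrite add0r; exact: H. Qed.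
End Gen.
Section Main.
Variables (R : realType) (X K M : finType) (N : nat) (P : X -> R) (d : X -> X -> R).
Variable f : N.-tuple X -> M -> K -> N.-tuple X.
Variable phi : N.-tuple X -> K -> M.
Hypotheses (N0 : (0 < N)%N) (M0 : (0 < #|M|)%N) (K0 : (0 < #|K|)%N) (HP : is_distr P).

Local Notation uM := (uniform R M).
Local Notation uK := (uniform R K).

Definition mu (xs : N.-tuple X) (m : M) (k : K) := prodP P xs * uM m * uK k.

Definition ind (b : bool) : R := if b then 1 else 0.

Definition w xt x := (N%:R)^-1 * \sum_xs \sum_m \sum_k mu xs m k *
   \sum_(i < N) ind ((tnth xs i == xt) && (tnth (f xs m k) i == x)).

Lemma P_ge0 x : 0 <= P x. Proof. by case: HP. Qed.
Lemma prodP_ge0 (xs : N.-tuple X) : 0 <= prodP P xs.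
Proof. by apply: prodr_ge0 => i _; exact: P_ge0. Qed.
Lemma mu_ge0 xs m k : 0 <= mu xs m k.
Proof. by rewrite /mu !mulr_ge0 ?prodP_ge0 // ltW // uniform_gt0. Qed.
Lemma ind_ge0 b : 0 <= ind b. Proof. by case: b => /=. Qed.
Lemma w_ge0 xt x : 0 <= w xt x.
Proof.
rewrite /w mulr_ge0 ?invr_ge0 ?ler0n //.
do 3! (apply: sumr_ge0 => ? _); rewrite mulr_ge0 ?mu_ge0 //.
by apply: sumr_ge0 => ? _; exact: ind_ge0.
Qed.

Lemma sum_prodP : \sum_(xs : N.-tuple X) prodP P xs = 1.
Proof.
rewrite /prodP (sum_tuple_prod (fun _ => P)).
by rewrite big1 // => i _; case: HP.
Qed.

Lemma sum_mu_const xs (z : R) :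
  \sum_m \sum_k mu xs m k * z = prodP P xs * z.
Proof.
rewrite /mu.
under eq_bigr do under eq_bigr do rewrite -!mulrA.
under eq_bigr do rewrite -mulr_sumr -mulr_sumr -mulr_suml sum_uniform // mul1r.
by rewrite -mulr_sumr -mulr_suml sum_uniform // mul1r.
Qed.

Lemma collapse (h : X -> X -> R) :
  \sum_xt \sum_x w xt x * h xt x =
  (N%:R)^-1 * \sum_xs \sum_m \sum_k mu xs m k *
      \sum_(i < N) h (tnth xs i) (tnth (f xs m k) i).
Proof.
rewrite /w.
under eq_bigr do under eq_bigr do rewrite -mulrA.
under eq_bigr do rewrite -mulr_sumr.
rewrite -mulr_sumr; congr (_ * _).
under eq_bigr do under eq_bigr do rewrite mulr_suml.
under eq_bigr do rewrite exchange_big.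
rewrite exchange_big; apply: eq_bigr => xs _.
under eq_bigr do under eq_bigr do rewrite mulr_suml.
under eq_bigr do rewrite exchange_big.
rewrite exchange_big; apply: eq_bigr => m _.
under eq_bigr do under eq_bigr do rewrite mulr_suml.
under eq_bigr do rewrite exchange_big.
rewrite exchange_big; apply: eq_bigr => k _.
under eq_bigr do under eq_bigr do rewrite -mulrA.
under eq_bigr do rewrite -mulr_sumr.
rewrite -mulr_sumr; congr (_ * _).
under eq_bigr do under eq_bigr do rewrite mulr_suml.
under eq_bigr do rewrite exchange_big.
rewrite exchange_big; apply: eq_bigr => i _.
rewrite (bigD1 (tnth xs i)) //= [X in _ + X]big1 ?addr0; last first.
  move=> xt /negbTE ne; apply: big1 => x _.
  by rewrite eq_sym ne /= /ind mul0r.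
rewrite (bigD1 (tnth (f xs m k) i)) //= [X in _ + X]big1 ?addr0; last first.
  by move=> x /negbTE ne; rewrite eqxx eq_sym ne /= /ind mul0r.
by rewrite !eqxx /ind /= mul1r.
Qed.

Lemma sum_w xt : \sum_x w xt x = P xt.
Proof.
have := collapse (fun a _ => ind (a == xt)).
rewrite (bigD1 xt) //= [X in _ + X]big1 ?addr0; last first.
  by move=> a /negbTE ne; apply: big1 => x _; rewrite /ind ne mulr0.
under eq_bigr do rewrite /ind eqxx mulr1.
move=> ->.
under eq_bigr do rewrite sum_mu_const.
under eq_bigr do rewrite mulr_sumr.
rewrite exchange_big /= /prodP.
under eq_bigr do rewrite (marg_tuple (fun x => ind (x == xt)) _ (proj2 HP)).
have e : \sum_t P t * ind (t == xt) = P xt.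
  rewrite (bigD1 xt) //= [X in _ + X]big1 ?addr0 /ind ?eqxx ?mulr1 //.
  by move=> a /negbTE ne; rewrite ne mulr0.
under eq_bigr do rewrite e.
rewrite sumr_const card_ord -[P xt *+ N]mulr_natl mulKf //.
by rewrite pnatr_eq0 -lt0n.
Qed.

Lemma w_P0 xt x : P xt = 0 -> w xt x = 0.
Proof.
move=> P0; have := sum_w xt; rewrite P0 => /eqP.
rewrite psumr_eq0 => [/allP H|]; last by move=> ? _; exact: w_ge0.
by apply/eqP; apply: H; rewrite mem_index_enum.
Qed.

Definition qb xt x := if P xt == 0 then (#|X|%:R)^-1 else w xt x / P xt.

Lemma qbP xt x : qb xt x * P xt = w xt x.
Proof.
rewrite /qb; case: eqP => [P0|/eqP ne]; first by rewrite P0 mulr0 w_P0.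
by rewrite divfK.
Qed.

Lemma qb_ge0 xt x : 0 <= qb xt x.
Proof.
rewrite /qb; case: eqP => _; first by rewrite invr_ge0 ler0n.
by rewrite divr_ge0 ?w_ge0 ?P_ge0.
Qed.

Lemma qb_channel : is_channel qb.
Proof.
move=> xt; split; first exact: qb_ge0.
rewrite /qb; case: eqP => [_|/eqP ne].
  by apply: (@sum_uniform R X); apply/card_gt0P; exists xt.
by rewrite -mulr_suml sum_w mulfV.
Qed.

Lemma distortion_eq : channel_distortion P d qb = avg_distortion f P d.
Proof.
rewrite /channel_distortion.
under eq_bigr do under eq_bigr do rewrite -mulrA qbP mulrC.
rewrite collapse /avg_distortion /distN !mulr_sumr.
apply: eq_bigr => xs _; rewrite mulr_sumr; apply: eq_bigr => m _.
rewrite mulr_sumr; apply: eq_bigr => k _.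
by rewrite /mu mulrCA.
Qed.

Definition g xt x := - log2 (qb xt x).

Lemma cond_entropy_eq : cond_entropy P qb = \sum_xt \sum_x w xt x * g xt x.
Proof.
rewrite /cond_entropy /entropy; apply: eq_bigr => xt _.
rewrite mulr_sumr; apply: eq_bigr => x _.
have [P0|Pn0] := eqVneq (P xt) 0.
  by rewrite P0 mul0r w_P0 ?mul0r.
rewrite /negxlog2 /g.
have [w0|wn0] := eqVneq (w xt x) 0.
  by rewrite /qb (negbTE Pn0) w0 mul0r eqxx mulr0 mul0r.
have qn0 : qb xt x != 0 by rewrite /qb (negbTE Pn0) mulf_neq0 ?invr_eq0.
rewrite (negbTE qn0) mulrN mulrA [P xt * _]mulrC qbP.
by rewrite mulrN.
Qed.

Definition G xs m k := \sum_(i < N) g (tnth xs i) (tnth (f xs m k) i).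

Lemma E1_eq : \sum_xs \sum_m \sum_k mu xs m k * G xs m k = N%:R * cond_entropy P qb.
Proof.
rewrite cond_entropy_eq collapse mulrA mulfV ?mul1r //.
by rewrite pnatr_eq0 -lt0n.
Qed.

Lemma ln2_gt0 : 0 < ln (2 : R).
Proof. by apply: ln_gt0; rewrite ltr1n. Qed.

Lemma negxlog2_le (t : R) : 0 <= t -> negxlog2 t <= (ln 2)^-1.
Proof.
rewrite /negxlog2; case: eqP => [_ _|/eqP tn0 t0]; first by rewrite invr_ge0 ltW // ln2_gt0.
have tp : 0 < t by rewrite lt_def tn0.
rewrite /log2 mulrA -mulNr -[X in _ <= X]mul1r ler_pM2r ?invr_gt0 ?ln2_gt0 // -mulrN.
have := @ln_le_sub1 _ t^-1; rewrite invr_gt0 => /(_ tp); rewrite lnV ?posrE // => h.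
have : t * - ln t <= t * (t^-1 - 1) by rewrite ler_pM2l.
rewrite mulrBr mulfV // mulr1 => h2.
by apply: (le_trans h2); rewrite lerBlDr lerDl ltW.
Qed.

Lemma cond_entropy_le q : is_channel q -> cond_entropy P q <= #|X|%:R * (ln 2)^-1.
Proof.
move=> qc; rewrite /cond_entropy.
apply: (@le_trans _ _ (\sum_xt P xt * (#|X|%:R * (ln 2)^-1))).
  apply: ler_sum => xt _; apply: ler_wpM2l; first exact: P_ge0.
  rewrite /entropy; apply: (@le_trans _ _ (\sum_(x : X) (ln 2)^-1)).
    by apply: ler_sum => x _; apply: negxlog2_le; case: (qc xt).
  by rewrite sumr_const mulr_natl.
by rewrite -mulr_suml (proj2 HP) mul1r.
Qed.

Lemma cap_ge D : avg_distortion f P d <= D -> cond_entropy P qb <= hiding_capacity P d D.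
Proof.
move=> hD; rewrite /hiding_capacity.
apply: sup_upper_bound; last by exists qb => //; split; [exact: qb_channel | rewrite distortion_eq].
split; first by exists (cond_entropy P qb); exists qb => //; split; [exact: qb_channel | rewrite distortion_eq].
exists (#|X|%:R * (ln 2)^-1) => y [q [qc _] <-]; exact: cond_entropy_le.
Qed.

Lemma uM_gt0 m : 0 < uM m. Proof. exact: uniform_gt0. Qed.
Lemma uK_gt0 k : 0 < uK k. Proof. exact: uniform_gt0. Qed.

Lemma zero_err : (forall eps : R, 0 < eps -> error_prob f phi P <= eps) ->
  forall xs m k, 0 < prodP P xs -> phi (f xs m k) k = m.
Proof.
move=> He xs m k Pxs.
have tge0 : forall xs m k, 0 <= prodP P xs * uM m * uK k *
     (if phi (f xs m k) k != m then 1 else 0).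
  by move=> ? ? ?; rewrite !mulr_ge0 ?prodP_ge0 ?(ltW (uM_gt0 _)) ?(ltW (uK_gt0 _)) //; case: ifP.
have e0 : error_prob f phi P = 0.
  apply/le_anti/andP; split; first exact: le0_of_small.
  by do 3! (apply: sumr_ge0 => ? _).
have h3 := sum3_0 tge0 e0 xs m k.
case: (eqVneq (phi (f xs m k) k) m) => // ne; move: h3; rewrite ne mulr1 => h3.
by have := mulr_gt0 (mulr_gt0 Pxs (uM_gt0 m)) (uK_gt0 k); rewrite h3 ltxx.
Qed.

Lemma seqprob_uM_gt0 n (ms : {ffun 'I_n -> M}) : 0 < seqprob uM ms.
Proof. by apply: prodr_gt0 => i _; exact: uM_gt0. Qed.

Lemma W_ge0 n (cs : {ffun 'I_n -> N.-tuple X}) : 0 <= seqprob (prodP P) cs.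
Proof. by apply: prodr_ge0 => i _; exact: prodP_ge0. Qed.

Lemma W_factor n (cs : {ffun 'I_n -> N.-tuple X}) :
  0 < seqprob (prodP P) cs -> forall j, 0 < prodP P (cs j).
Proof. by move=> Wp j; apply: (prod_pos_factor (fun i => prodP_ge0 (cs i)) Wp). Qed.

Lemma inj_stego n : spurious_kc f P n = 0 ->
  (forall xs m k, 0 < prodP P xs -> phi (f xs m k) k = m) ->
  forall cs : {ffun 'I_n -> N.-tuple X}, 0 < seqprob (prodP P) cs ->
  forall k k' (ms ms' : {ffun 'I_n -> M}),
  stego f cs ms k = stego f cs ms' k' -> k = k' /\ ms = ms'.
Proof.
move=> Hs Herr cs Wp k k' ms ms' E.
have poss : forall k (cs : {ffun 'I_n -> N.-tuple X}) ms, possible_kc R f cs (stego f cs ms k) k.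
  move=> k0 cs0 ms0; apply/existsP; exists ms0; rewrite eqxx andbT.
  exact: seqprob_uM_gt0.
have tge0 : forall k (cs : {ffun 'I_n -> N.-tuple X}) (ms : {ffun 'I_n -> M}), 0 <= uK k * seqprob (prodP P) cs * seqprob uM ms *
    ((#|[pred k' : K | possible_kc R f cs (stego f cs ms k) k']|)%:R - 1).
  move=> k0 cs0 ms0; rewrite !mulr_ge0 ?W_ge0 ?(ltW (uK_gt0 _)) ?(ltW (seqprob_uM_gt0 _)) //.
  rewrite subr_ge0 ler1n; apply/card_gt0P; exists k0; exact: poss.
have h := sum3_0 tge0 Hs k cs ms.
have c1 : #|[pred k' : K | possible_kc R f cs (stego f cs ms k) k']| = 1%N.
  have wp : 0 < uK k * seqprob (prodP P) cs * seqprob uM ms.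
    by rewrite !mulr_gt0 ?uK_gt0 ?seqprob_uM_gt0.
  by move/eqP: h; rewrite mulf_eq0 (gt_eqF wp) /= subr_eq0 pnatr_eq1 => /eqP.
have kk' : k = k'.
  have pk' : k' \in [pred k' : K | possible_kc R f cs (stego f cs ms k) k'].
    by rewrite inE E; exact: poss.
  have pk : k \in [pred k' : K | possible_kc R f cs (stego f cs ms k) k'].
    by rewrite inE; exact: poss.
  have le1 : (#|[pred k' : K | possible_kc R f cs (stego f cs ms k) k']| <= 1)%N.
    by rewrite c1.
  by have := (card_le1P le1) k pk k'; rewrite pk' inE => /esym/eqP ->.
split => //; subst k'.
apply/ffunP => j; have := congr1 (fun s : {ffun _ -> _} => s j) E; rewrite /stego !ffunE => Ej.
by rewrite -(Herr (cs j) (ms j) k (W_factor Wp j)) Ej Herr // W_factor.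
Qed.

Lemma qb_pos xs m k i : 0 < prodP P xs -> 0 < qb (tnth xs i) (tnth (f xs m k) i).
Proof.
move=> Pxs.
have Pp : 0 < P (tnth xs i) by apply: (prod_pos_factor (fun i => P_ge0 (tnth xs i)) Pxs).
rewrite /qb gt_eqF // divr_gt0 // /w mulr_gt0 ?invr_gt0 ?ltr0n //.
have ig : forall xs m k, 0 <= mu xs m k *
   \sum_(i < N) ind ((tnth xs i == tnth xs i) && (tnth (f xs m k) i == tnth (f xs m k) i)).
  by move=> ? ? ?; rewrite mulr_ge0 ?mu_ge0 // sumr_ge0 // => ? _; exact: ind_ge0.
apply: (sum_gt0_term (i := xs)) => [xs'|].
  by do 2! (apply: sumr_ge0 => ? _); rewrite mulr_ge0 ?mu_ge0 // sumr_ge0 // => ? _; exact: ind_ge0.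
apply: (sum_gt0_term (i := m)) => [m'|].
  by apply: sumr_ge0 => ? _; rewrite mulr_ge0 ?mu_ge0 // sumr_ge0 // => ? _; exact: ind_ge0.
apply: (sum_gt0_term (i := k)) => [k'|].
  by rewrite mulr_ge0 ?mu_ge0 // sumr_ge0 // => ? _; exact: ind_ge0.
rewrite mulr_gt0 //; first by rewrite /mu !mulr_gt0 ?uM_gt0 ?uK_gt0.
apply: (sum_gt0_term (i := i)) => [? |]; first exact: ind_ge0.
by rewrite !eqxx /ind ltr01.
Qed.

Section Fixcs.
Variables (n : nat) (cs : {ffun 'I_n -> N.-tuple X}).
Hypothesis Wp : 0 < seqprob (prodP P) cs.

Definition rho k (ms : {ffun 'I_n -> M}) :=
  \prod_(j < n) \prod_(i < N) qb (tnth (cs j) i) (tnth (f (cs j) (ms j) k) i).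

Lemma rho_gt0 k (ms : {ffun 'I_n -> M}) : 0 < rho k ms.
Proof.
by apply: prodr_gt0 => j _; apply: prodr_gt0 => i _; apply: qb_pos; exact: W_factor.
Qed.

Lemma sumG_eq k (ms : {ffun 'I_n -> M}) : \sum_(j < n) G (cs j) (ms j) k = - ln (rho k ms) / ln 2.
Proof.
rewrite /rho ln_prod => [|j]; last first.
  by apply: prodr_gt0 => i _; apply: qb_pos; exact: W_factor.
rewrite -sumrN mulr_suml; apply: eq_bigr => j _.
rewrite ln_prod => [|i]; last by apply: qb_pos; exact: W_factor.
rewrite -sumrN mulr_suml; apply: eq_bigr => i _.
by rewrite /g /log2 mulNr.
Qed.

Lemma sum_rho_le1 :
  (forall k k' (ms ms' : {ffun 'I_n -> M}),
     stego f cs ms k = stego f cs ms' k' -> k = k' /\ ms = ms') ->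
  \sum_k \sum_(ms : {ffun 'I_n -> M}) rho k ms <= 1.
Proof.
move=> Hinj.
pose r (ss : {ffun 'I_n -> N.-tuple X}) :=
  \prod_(j < n) \prod_(i < N) qb (tnth (cs j) i) (tnth (ss j) i).
pose h (p : K * {ffun 'I_n -> M}) := stego f cs p.2 p.1.
have r_ge0 ss : 0 <= r ss.
  by apply: prodr_ge0 => j _; apply: prodr_ge0 => i _; exact: qb_ge0.
have e1 : \sum_k \sum_(ms : {ffun 'I_n -> M}) rho k ms =
          \sum_(p in [set: K * {ffun 'I_n -> M}]%SET) r (h p).
  rewrite pair_bigA /=; apply: eq_big => [p|[k ms] _]; first by rewrite inE.
  by rewrite /r /h /rho /stego /=; apply: eq_bigr => j _; rewrite ffunE.
have inj : {in [set: K * {ffun 'I_n -> M}]%SET &, injective h}.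
  by move=> [k ms] [k' ms'] _ _ /Hinj /= [-> ->].
rewrite e1 -(big_imset _ inj).
apply: (@le_trans _ _ (\sum_ss r ss)).
  rewrite [X in X <= _]big_mkcond /=; apply: ler_sum => ss _.
  by case: ifP => _ //.
rewrite /r (sum_ffun_prod (fun j t => \prod_(i < N) qb (tnth (cs j) i) (tnth t i))).
rewrite big1 // => j _.
rewrite (sum_tuple_prod (fun i x => qb (tnth (cs j) i) x)).
by rewrite big1 // => i _; case: (qb_channel (tnth (cs j) i)).
Qed.

Lemma gibbs :
  (forall k k' (ms ms' : {ffun 'I_n -> M}),
     stego f cs ms k = stego f cs ms' k' -> k = k' /\ ms = ms') ->
  log2 (#|K|%:R : R) + n%:R * log2 (#|M|%:R : R) <=
  \sum_k \sum_(ms : {ffun 'I_n -> M}) uK k * seqprob uM ms * \sum_(j < n) G (cs j) (ms j) k.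
Proof.
move=> Hinj.
have Kp : 0 < (#|K|%:R : R) by rewrite ltr0n.
have Mp : 0 < (#|M|%:R : R) by rewrite ltr0n.
set L : R := #|K|%:R * #|M|%:R ^+ n.
have Lp : 0 < L by rewrite mulr_gt0 // exprn_gt0.
have wL : forall k (ms : {ffun 'I_n -> M}), uK k * seqprob uM ms = L^-1.
  move=> k ms; rewrite /seqprob /uniform prodr_const card_ord /L invfM exprVn //.
have sumL : \sum_(k : K) \sum_(ms : {ffun 'I_n -> M}) L^-1 = 1.
  rewrite sumr_const sumr_const -mulrnA -[_ *+ _]mulr_natr card_ffun card_ord.
  by rewrite mulnC natrM natrX mulVf // gt_eqF.
have logL : log2 L = log2 (#|K|%:R : R) + n%:R * log2 (#|M|%:R : R).
  rewrite /log2 /L lnM ?posrE ?exprn_gt0 // lnXn // mulrDl mulr_natl mulrnAl //.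
rewrite -logL.
under eq_bigr do under eq_bigr do rewrite wL sumG_eq.
have c0 : 0 < (ln (2:R))^-1 by rewrite invr_gt0 ln2_gt0.
apply: (@le_trans _ _ (\sum_(k : K) \sum_(ms : {ffun 'I_n -> M})
          (L^-1 * log2 L + (L^-1 - rho k ms) * (ln 2)^-1))); last first.
  apply: ler_sum => k _; apply: ler_sum => ms _.
  have rp := rho_gt0 k ms.
  have key := ln_le_sub1 (mulr_gt0 Lp rp).
  rewrite lnM ?posrE // in key.
  have key2 : L^-1 * (ln L + ln (rho k ms)) <= L^-1 * (L * rho k ms - 1).
    by rewrite ler_pM2l ?invr_gt0.
  rewrite mulrBr mulrA mulVf ?gt_eqF // mul1r mulr1 in key2.
  have H2 := ler_wpM2r (ltW c0) key2.
  rewrite /log2.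
  set c := (ln (2:R))^-1 in c0 H2 *.
  have e1 : L^-1 * (ln L / ln 2) = L^-1 * ln L * c by rewrite mulrA.
  have e2 : L^-1 * (- ln (rho k ms) / ln 2) = - (L^-1 * ln (rho k ms) * c).
    by rewrite mulNr mulrN mulrA.
  have e3 : L^-1 * (ln L + ln (rho k ms)) * c =
            L^-1 * ln L * c + L^-1 * ln (rho k ms) * c by rewrite mulrDr mulrDl.
  have e4 : (rho k ms - L^-1) * c = rho k ms * c - L^-1 * c by rewrite mulrBl.
  have e5 : (L^-1 - rho k ms) * c = L^-1 * c - rho k ms * c by rewrite mulrBl.
  rewrite e1 e2 e5; rewrite e3 e4 in H2.
  move: H2; set A := L^-1 * ln L * c; set B := L^-1 * ln (rho k ms) * c.
  set C := rho k ms * c; set D := L^-1 * c; move=> H2.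
  lra.
under eq_bigr do rewrite big_split /=.
rewrite big_split /= -!mulr_suml sumL mul1r lerDl.
under eq_bigr do rewrite -mulr_suml.
rewrite -mulr_suml mulr_ge0 ?(ltW c0) //.
under eq_bigr do rewrite sumrB.
by rewrite sumrB sumL subr_ge0 sum_rho_le1.
Qed.
End Fixcs.

Lemma T_j n (j : 'I_n) k :
  \sum_(cs : {ffun 'I_n -> N.-tuple X}) \sum_(ms : {ffun 'I_n -> M})
     seqprob (prodP P) cs * seqprob uM ms * G (cs j) (ms j) k =
  \sum_xs \sum_m prodP P xs * uM m * G xs m k.
Proof.
under eq_bigr do under eq_bigr do rewrite -mulrA.
under eq_bigr do rewrite -mulr_sumr.
under eq_bigr => cs _ do
  rewrite /seqprob (marg_ffun (fun m => G (cs j) m k) j (sum_uniform R M0)).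
rewrite (marg_ffun (fun xs => \sum_m uM m * G xs m k) j sum_prodP).
by apply: eq_bigr => xs _; rewrite mulr_sumr; apply: eq_bigr => m _; rewrite mulrA.
Qed.

Definition E1 := \sum_xs \sum_m \sum_k mu xs m k * G xs m k.

Lemma T_eq n :
  \sum_k \sum_(cs : {ffun 'I_n -> N.-tuple X}) \sum_(ms : {ffun 'I_n -> M})
     uK k * seqprob (prodP P) cs * seqprob uM ms * \sum_(j < n) G (cs j) (ms j) k
  = n%:R * E1.
Proof.
under eq_bigr do under eq_bigr do under eq_bigr do rewrite mulr_sumr.
under eq_bigr do under eq_bigr do rewrite exchange_big.
under eq_bigr do rewrite exchange_big.
rewrite exchange_big /=.
transitivity (\sum_(j < n) E1); last by rewrite sumr_const card_ord mulr_natl.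
apply: eq_bigr => j _.
transitivity (\sum_k uK k * \sum_xs \sum_m prodP P xs * uM m * G xs m k).
  apply: eq_bigr => k _; rewrite -(T_j j) mulr_sumr; apply: eq_bigr => cs _.
  by rewrite mulr_sumr; apply: eq_bigr => ms _; rewrite !mulrA.
under eq_bigr do rewrite mulr_sumr.
rewrite /E1 exchange_big /=; apply: eq_bigr => xs _.
under eq_bigr do rewrite mulr_sumr.
rewrite exchange_big /=; apply: eq_bigr => m _.
apply: eq_bigr => k _; rewrite /mu; ring.
Qed.

Lemma sum_W n : \sum_(cs : {ffun 'I_n -> N.-tuple X}) seqprob (prodP P) cs = 1.
Proof.
rewrite /seqprob (sum_ffun_prod (fun _ xs => prodP P xs)).
by rewrite big1 // => i _; exact: sum_prodP.
Qed.

Lemma T_ge n : spurious_kc f P n = 0 ->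
  (forall xs m k, 0 < prodP P xs -> phi (f xs m k) k = m) ->
  log2 (#|K|%:R : R) + n%:R * log2 (#|M|%:R : R) <= n%:R * E1.
Proof.
move=> Hs Herr; rewrite -T_eq.
set B := _ + _.
rewrite exchange_big /=.
have e : forall cs : {ffun 'I_n -> N.-tuple X},
  \sum_k \sum_(ms : {ffun 'I_n -> M}) uK k * seqprob (prodP P) cs * seqprob uM ms *
     \sum_(j < n) G (cs j) (ms j) k =
  seqprob (prodP P) cs * \sum_k \sum_(ms : {ffun 'I_n -> M})
     (uK k * seqprob uM ms * \sum_(j < n) G (cs j) (ms j) k).
  move=> cs; rewrite mulr_sumr; apply: eq_bigr => k _.
  by rewrite mulr_sumr; apply: eq_bigr => ms _; ring.
under eq_bigr do rewrite e.
apply: (@le_trans _ _ (\sum_(cs : {ffun 'I_n -> N.-tuple X}) seqprob (prodP P) cs * B)).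
  by rewrite -mulr_suml sum_W mul1r.
apply: ler_sum => cs _.
have [W0|Wn0] := eqVneq (seqprob (prodP P) cs) 0; first by rewrite W0 !mul0r.
have Wp : 0 < seqprob (prodP P) cs by rewrite lt_def Wn0 W_ge0.
rewrite ler_wpM2l ?W_ge0 //.
exact: gibbs Wp (inj_stego Hs Herr Wp).
Qed.

Lemma kc_le_so n : 0 <= spurious_kc f P n /\ spurious_kc f P n <= spurious_so f P n.
Proof.
have poss : forall k (cs : {ffun 'I_n -> N.-tuple X}) ms,
    possible_kc R f cs (stego f cs ms k) k.
  move=> k0 cs0 ms0; apply/existsP; exists ms0; rewrite eqxx andbT.
  exact: seqprob_uM_gt0.
have wge0 : forall k (cs : {ffun 'I_n -> N.-tuple X}) (ms : {ffun 'I_n -> M}),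
    0 <= uK k * seqprob (prodP P) cs * seqprob uM ms.
  by move=> k cs ms; rewrite !mulr_ge0 ?W_ge0 ?(ltW (uK_gt0 _)) ?(ltW (seqprob_uM_gt0 _)).
split.
  do 3! (apply: sumr_ge0 => ? _); rewrite mulr_ge0 ?wge0 //.
  rewrite subr_ge0 ler1n; apply/card_gt0P; eexists; exact: poss.
apply: ler_sum => k _; apply: ler_sum => cs _; apply: ler_sum => ms _.
have [W0|Wn0] := eqVneq (seqprob (prodP P) cs) 0; first by rewrite W0 mulr0 !mul0r.
have Wp : 0 < seqprob (prodP P) cs by rewrite lt_def Wn0 W_ge0.
rewrite ler_wpM2l ?wge0 // lerB // ler_nat.
apply/subset_leq_card/fintype.subsetP => k'; rewrite !inE => /existsP [ms' /andP [pm e]].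
apply/existsP; exists cs; apply/existsP; exists ms'; by rewrite pm e Wp.
Qed.

Lemma entropy_uniform (T : finType) : (0 < #|T|)%N ->
  entropy (uniform R T) = log2 (#|T|%:R).
Proof.
move=> T0; rewrite /entropy /negxlog2 /uniform.
have Tp : 0 < (#|T|%:R : R) by rewrite ltr0n.
rewrite invr_eq0 (gt_eqF Tp) sumr_const -[LHS]mulr_natl /log2 lnV ?posrE //.
have l2 : ln (2:R) != 0 by rewrite gt_eqF // ln2_gt0.
rewrite (_ : #|xpredT| = #|T|) //.
by field; rewrite l2 gt_eqF.
Qed.
End Main.

Theorem corollary1 (R : realType) (X K M : finType) (N : nat)
  (P : X -> R) (d : X -> X -> R) (D : R)
  (f : N.-tuple X -> M -> K -> N.-tuple X) (phi : N.-tuple X -> K -> M) :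
  (0 < N)%N -> (0 < #|M|)%N -> (0 < #|K|)%N ->
  is_distr P ->
  (forall x y, 0 <= d x y) ->
  avg_distortion f P d <= D ->
  (forall eps : R, 0 < eps -> error_prob f phi P <= eps) ->
  forall eps : R, 0 < eps ->
  (forall n0, is_unicity_distance (spurious_kc f P) n0 ->
     (entropy (uniform R K) / N%:R) /
       (hiding_capacity P d D - entropy (uniform R M) / N%:R + eps) <= n0%:R)
  /\
  (forall n1, is_unicity_distance (spurious_so f P) n1 ->
     exists n0, is_unicity_distance (spurious_kc f P) n0 /\ (n0 <= n1)%N).
Proof.
move=> N0 M0 K0 HP d0 hD herr eps eps0; split.
- move=> n0 [Hs _].
  have Herr := @zero_err _ _ _ _ _ P f phi HP herr.
  have TB := T_ge N0 M0 K0 HP Hs Herr.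
  rewrite /E1 (E1_eq f N0 M0 K0 HP) in TB.
  have CB := cap_ge N0 M0 K0 HP hD.
  rewrite !entropy_uniform //.
  set C := hiding_capacity P d D in CB *.
  set c := cond_entropy P _ in TB CB.
  set lk := log2 (#|K|%:R : R) in TB *.
  set lm := log2 (#|M|%:R : R) in TB *.
  have Np : 0 < (N%:R : R) by rewrite ltr0n.
  have nr0 : 0 <= (n0%:R : R) by rewrite ler0n.
  have lk0 : 0 <= lk.
    rewrite /lk /log2 divr_ge0 ?ln_ge0 ?ler1n // ltW // ln2_gt0.
  have e1 : n0%:R * (N%:R * c) <= n0%:R * (N%:R * C).
    by rewrite ler_wpM2l // ler_wpM2l // ltW.
  have e2 : (lk + n0%:R * lm) / N%:R <= n0%:R * (N%:R * C) / N%:R.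
    by rewrite ler_pM2r ?invr_gt0 //; apply: le_trans TB e1.
  have e3 : (lk + n0%:R * lm) / N%:R = lk / N%:R + n0%:R * (lm / N%:R).
    by rewrite mulrDl mulrA.
  have e4 : n0%:R * (N%:R * C) / N%:R = n0%:R * C.
    by rewrite mulrCA mulrAC mulfV ?mul1r ?gt_eqF // mulrC.
  rewrite e3 e4 in e2.
  set a := lk / N%:R in e2 *; set b := lm / N%:R in e2 *.
  have a0 : 0 <= a by rewrite /a divr_ge0 // ltW.
  have [dp|dn] := ltrP 0 (C - b + eps).
    rewrite ler_pdivrMr // mulrDr mulrBr.
    have : 0 <= n0%:R * eps by rewrite mulr_ge0 // ltW.
    move: e2; set u := n0%:R * C; set v := n0%:R * b; set z := n0%:R * eps.
    move=> e2 hz; lra.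
  apply: (@le_trans _ _ 0) => //.
  by rewrite mulr_ge0_le0 // invr_le0.
- move=> n1 [Hs1 _].
  have Hkc : spurious_kc f P n1 = 0.
    have [h1 h2] := kc_le_so f HP n1.
    by apply/le_anti/andP; split => //; rewrite -Hs1.
  have ex : exists n, spurious_kc f P n == 0 by exists n1; apply/eqP.
  case: (ex_minnP ex) => n0 /eqP H0 Hm.
  exists n0; split; last by apply: Hm; apply/eqP.
  by split => // m /eqP; exact: Hm.
Qed.
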